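(* For every finite $\sigma$-structure $\mathscr{A}$, $\mathsf{tw}(\mathscr{A})=\kappa^{\mathbb{P}}(\mathscr{A})-1$.
   Context: Let $\mathbf{k}=\{1,\dots,k\}$, $k\ge1$. $\mathbb{P}_k\mathscr{A}$ has universe $(\mathbf{k}\times A)^+$ (non-empty finite sequences $[(p_1,a_1),\dots,(p_n,a_n)]$); $\varepsilon$ gives the $A$-component of the last move; for $n$-ary $R$, $R^{\mathbb{P}_k\mathscr{A}}(s_1,\dots,s_n)$ iff the $s_i$ are pairwise prefix-comparable, for each $i$ the pebble index of the last move of $s_i$ does not occur in the suffix of $s_i$ in any $s_j\sqsupseteq s_i$, and $R^{\mathscr{A}}(\varepsilon s_1,\dots,\varepsilon s_n)$. Comultiplication: $\delta[(p_1,a_1),\dots,(p_j,a_j)]=[(p_1,s_1),\dots,(p_j,s_j)]$ where $s_i=[(p_1,a_1),\dots,(p_i,a_i)]$; functor action: $\mathbb{P}_k h[(p_1,a_1),\dots,(p_j,a_j)]=[(p_1,h(a_1)),\dots,(p_j,h(a_j))]$. A $\mathbb{P}_k$-coalgebra on $\mathscr{A}$ is a homomorphism $\alpha:\mathscr{A}\to\mathbb{P}_k\mathscr{A}$ with $\delta\circ\alpha=\mathbb{P}_k\alpha\circ\alpha$ and $\varepsilon\circ\alpha=\mathrm{id}$; $\kappa^{\mathbb{P}}(\mathscr{A})$ is the least $k$ for which one exists. $\mathsf{tw}(\mathscr{A})$ is the tree-width of the Gaifman graph $\mathcal{G}(\mathscr{A})=(A,\frown)$ ($a\frown a'$ iff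 $a\ne a'$ occur in a common tuple of some relation), i.e. the minimum over tree decompositions $(T,\le,\lambda)$ of $\max_x|\lambda(x)|-1$, where a tree decomposition is a rooted tree $T$ with $\lambda:T\to\mathscr{P}(A)$ such that every vertex is in some bag, adjacent vertices share a bag, and the bags containing any given vertex form a connected set (contain every node on the tree path between two of them). *)

(* Defs.v *)
From HB Require Import structures.
From mathcomp Require Import all_boot.
Set Implicit Arguments. Unset Strict Implicit. Unset Printing Implicit Defensive.

(** A relational signature is given by a type of symbols [S] with arities
    [ar : S -> nat]; a finite sigma-structure is a finType [A] together with
    interpretations [R s : pred ((ar s).-tuple A)]. *)

Definition neseq (T : Type) := (T * seq T)%type.
Definition ne_list T (u : neseq T) : seq T := u.1 :: u.2.

(** Universe of P_k T: non-empty sequences of moves (p, a), p : 'I_k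
    (pebble indices {1..k} represented as {0..k-1}). *)
Definition Pk (k : nat) (T : Type) := neseq ('I_k * T).

Definition eps k T (u : Pk k T) : T := (last u.1 u.2).2.

Definition last_peb k T (u : Pk k T) : 'I_k := (last u.1 u.2).1.

(** comultiplication: [(p1,a1),..,(pj,aj)] |-> [(p1,s1),..,(pj,sj)],
    s_i the prefix of length i *)
Definition delta k T (u : Pk k T) : Pk k (Pk k T) :=
  let x := u.1 in let s := u.2 in
  ((x.1, (x, [::])),
   [seq ((nth x s i).1, (x, take i.+1 s)) | i <- iota 0 (size s)]).

Definition Pmap k T U (h : T -> U) (u : Pk k T) : Pk k U :=
  let f := fun pa : 'I_k * T => (pa.1, h pa.2) in (f u.1, map f u.2).

Definition PRel k (T : eqType) n (Rel : pred (n.-tuple T))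
    (u : n.-tuple (Pk k T)) : bool :=
  [forall i : 'I_n, forall j : 'I_n,
     prefix (ne_list (tnth u i)) (ne_list (tnth u j))
     || prefix (ne_list (tnth u j)) (ne_list (tnth u i))]
  && [forall i : 'I_n, forall j : 'I_n,
     prefix (ne_list (tnth u i)) (ne_list (tnth u j)) ==>
     (last_peb (tnth u i)
        \notin map fst (drop (size (ne_list (tnth u i))) (ne_list (tnth u j))))]
  && Rel (map_tuple (@eps k T) u).

Section Structures.
Variables (S : Type) (ar : S -> nat) (A : finType)
          (R : forall s : S, pred ((ar s).-tuple A)).

Definition is_Pk_coalgebra k (alpha : A -> Pk k A) : Prop :=
  (forall (s : S) (t : (ar s).-tuple A),
      R t -> PRel (@R s) (map_tuple alpha t))
  /\ (forall a, delta (alpha a) = Pmap alpha (alpha a))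
  /\ (forall a, eps (alpha a) = a).

Definition has_Pk_coalgebra k : Prop :=
  exists alpha : A -> Pk k A, is_Pk_coalgebra alpha.

Definition is_kappaP (n : nat) : Prop :=
  0 < n /\ has_Pk_coalgebra n /\
  (forall m, 0 < m -> has_Pk_coalgebra m -> n <= m).

Definition gaifman (a b : A) : Prop :=
  a != b /\ exists (s : S) (t : (ar s).-tuple A), R t /\ a \in t /\ b \in t.

(** rooted tree given as a finite tree order (root least, downsets chains) *)
Definition tree_order (T : finType) (le : rel T) : Prop :=
  reflexive le /\ antisymmetric le /\ transitive le
  /\ (exists r, forall x, le r x)
  /\ (forall x y z, le y x -> le z x -> le y z || le z y).

Definition on_path (T : finType) (le : rel T) (x y z : T) : bool :=
  (le z x || le z y) && [forall w, le w x ==> le w y ==> le w z].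

Definition tree_dec (T : finType) (le : rel T) (lam : T -> {set A}) : Prop :=
  tree_order le
  /\ (forall a, exists x, a \in lam x)
  /\ (forall a b, gaifman a b -> exists x, (a \in lam x) && (b \in lam x))
  /\ (forall a x y z, a \in lam x -> a \in lam y -> on_path le x y z ->
        a \in lam z).

Definition width (T : finType) (lam : T -> {set A}) : nat :=
  (\max_(x : T) #|lam x|) - 1.

Definition is_tw (n : nat) : Prop :=
  (exists (T : finType) (le : rel T) (lam : T -> {set A}),
      tree_dec le lam /\ width lam = n)
  /\ (forall (T : finType) (le : rel T) (lam : T -> {set A}),
        tree_dec le lam -> n <= width lam).

End Structures.

(* Main.v *)
Require Import Defs.
From HB Require Import structures.
From mathcomp Require Import all_boot.
From Stdlib Require Import Classical.
From mathcomp Require Import zify.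
Set Implicit Arguments. Unset Strict Implicit. Unset Printing Implicit Defensive.

Lemma prefix_comp (T : eqType) (s1 s2 s : seq T) :
  prefix s1 s -> prefix s2 s -> prefix s1 s2 || prefix s2 s1.
Proof.
move=> /prefixP[r1 e1] /prefixP[r2 e2].
have E1 : s1 = take (size s1) s by rewrite e1 take_size_cat.
have E2 : s2 = take (size s2) s by rewrite e2 take_size_cat.
rewrite E1 E2; set n1 := size s1; set n2 := size s2.
case: (leqP n1 n2) => h.
  by rewrite -(take_takel _ h) prefix_take.
by rewrite -(take_takel _ (ltnW h)) prefix_take orbT.
Qed.

Lemma ne_eq (T : Type) (u : neseq T) x s : ne_list u = x :: s -> u = (x, s).
Proof. by case: u => y t /= [-> ->]. Qed.

Lemma last_in_tail (T : eqType) (u : neseq T) l1 y q :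
  ne_list u = l1 ++ y :: q -> last u.1 u.2 \in y :: q.
Proof.
case: u => x s /=; case: l1 => [|z l1] /= [-> ->]; first exact: mem_last.
by rewrite last_cat /=; apply: mem_last.
Qed.

Lemma prefix_anti (T : eqType) (s1 s2 : seq T) :
  prefix s1 s2 -> prefix s2 s1 -> s1 = s2.
Proof.
move=> /prefixP[r e] /prefixP[r' e'].
case: r e => [|x r] e; first by rewrite e cats0.
have := congr1 size e'; rewrite e !size_cat /=; lia.
Qed.

Lemma drop_cat_gen (T : Type) n (s r : seq T) :
  drop n (s ++ r) = drop n s ++ drop (n - size s) r.
Proof.
rewrite drop_cat; case: ifP => h.
  have -> : n - size s = 0 by apply/eqP; rewrite subn_eq0 ltnW.
  by rewrite drop0.
by rewrite (drop_oversize (n:=n) (s:=s)) // leqNgt h.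
Qed.

Section Dir2.
Variables (S : Type) (ar : S -> nat) (A : finType)
          (R : forall s : S, pred ((ar s).-tuple A)).
Variables (k : nat) (alpha : A -> Pk k A).
Hypothesis Hal : is_Pk_coalgebra R alpha.

Definition NL a := ne_list (alpha a).
Arguments NL : simpl never.

Lemma NL_inj : injective NL.
Proof.
move=> a b e; have [_ [_ He]] := Hal.
rewrite -(He a) -(He b); congr eps.
by rewrite (surjective_pairing (alpha a)) (ne_eq (esym e)).
Qed.

Definition leO (x y : option A) : bool :=
  match x, y with
  | None, _ => true
  | Some _, None => false
  | Some a, Some b => prefix (NL a) (NL b)
  end.

Definition lamO (x : option A) : {set A} :=
  match x with
  | None => set0
  | Some b => [set a | prefix (NL a) (NL b) &&
       (last_peb (alpha a) \notin map fst (drop (size (NL a)) (NL b)))]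
  end.

Lemma dir2_tree : tree_order leO.
Proof.
split; first by case=> [a|] //; exact: prefix_refl.
split.
  case=> [a|] [b|] // /andP[h1 h2]; congr Some; apply: NL_inj.
  exact: prefix_anti.
split.
  case=> [b|] [a|] [c|] //; exact: prefix_trans.
split; first by exists None.
case=> [a|] [b|] [c|] //; first exact: prefix_comp.
all: by move=> *; rewrite orbT.
Qed.

Lemma hom_pair s (t : (ar s).-tuple A) a b : R t -> a \in t -> b \in t ->
  (prefix (NL a) (NL b) || prefix (NL b) (NL a)) /\
  (prefix (NL a) (NL b) ->
   last_peb (alpha a) \notin map fst (drop (size (NL a)) (NL b))).
Proof.
move=> Rt /tnthP[i ->] /tnthP[j ->].
have [Hh _] := Hal; move: (Hh s t Rt) => /andP[/andP[H1 H2] _].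
move: (forallP (forallP H1 i) j) (forallP (forallP H2 i) j).
by rewrite !tnth_map => h1 h2; split=> // /(implyP h2).
Qed.

Lemma dir2_dec : tree_dec R leO lamO.
Proof.
split; first exact: dir2_tree.
split.
  move=> a; exists (Some a); rewrite /lamO inE prefix_refl drop_size.
  by [].
split.
  move=> a b [nab [s [t [Rt [ha hb]]]]].
  have [hc hp] := hom_pair Rt ha hb; have [hc' hp'] := hom_pair Rt hb ha.
  case/orP: hc => h.
    exists (Some b); rewrite /lamO !inE h hp // prefix_refl drop_size.
    by [].
  exists (Some a); rewrite /lamO !inE h hp' // prefix_refl drop_size.
  by [].
move=> a [b|] [c|] [d|] //; rewrite /lamO ?inE //.
  move=> /andP[pab nb] /andP[pac nc] /andP[hd /forallP hw].
  have pad : prefix (NL a) (NL d).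
    by move: (hw (Some a)) => /implyP/(_ pab)/implyP/(_ pac).
  rewrite pad /=.
  have sub : forall e, prefix (NL d) (NL e) ->
      last_peb (alpha a) \notin map fst (drop (size (NL a)) (NL e)) ->
      last_peb (alpha a) \notin map fst (drop (size (NL a)) (NL d)).
    move=> e /prefixP[r ->]; rewrite drop_cat_gen map_cat mem_cat negb_or.
    by case/andP.
  by case/orP: hd => h; [apply: (sub b) | apply: (sub c)].
move=> /andP[pab _] /andP[pac _] /andP[_ /forallP hw].
by move: (hw (Some a)) => /implyP/(_ pab)/implyP/(_ pac).
Qed.

Lemma dir2_card x : #|lamO x| <= k.
Proof.
case: x => [b|]; last by rewrite cards0.
rewrite -(card_ord k) -(card_in_imset (f := fun a => last_peb (alpha a))).
  exact: max_card.
have key : forall a a', a \in lamO (Some b) -> a' \in lamO (Some b) ->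
    prefix (NL a) (NL a') -> a != a' -> last_peb (alpha a) != last_peb (alpha a').
  move=> a a'; rewrite /lamO !inE => /andP[pab nb] /andP[pa'b _] paa' naa'.
  move: paa' => /prefixP[q eq].
  case: q eq => [|y q] eq.
    by move: naa'; rewrite (NL_inj (esym (etrans eq (cats0 _)))) eqxx.
  move: pa'b => /prefixP[r eb].
  have hl := @last_in_tail _ (alpha a') (NL a) y q eq.
  apply: contra nb => /eqP ->; rewrite eb eq -catA drop_size_cat //.
  by rewrite map_cat mem_cat; apply/orP; left; rewrite /last_peb; exact: (map_f fst hl).
move=> a a' ha ha' e; apply/eqP; apply: contraT => naa'.
have := ha; rewrite /lamO inE => /andP[pab _].
have := ha'; rewrite /lamO inE => /andP[pa'b _].
case/orP: (prefix_comp pab pa'b) => h.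
  by move: (key a a' ha ha' h naa'); rewrite e eqxx.
by move: (key a' a ha' ha h); rewrite eq_sym naa' e eqxx => /(_ isT).
Qed.

Lemma dir2_width : width lamO <= k - 1.
Proof.
rewrite /width leq_sub2r //; apply/bigmax_leqP => x _; exact: dir2_card.
Qed.
End Dir2.

Section Dir1.
Variables (S : Type) (ar : S -> nat) (A : finType)
          (R : forall s : S, pred ((ar s).-tuple A)).
Variables (T : finType) (le : rel T) (lam : T -> {set A}) (r : T) (k : nat).
Hypothesis Hdec : tree_dec R le lam.
Hypothesis Hr : forall x, le r x.
Hypothesis Hk : forall x, #|lam x| <= k.
Hypothesis Hk0 : 0 < k.

Lemma le_refl : reflexive le. Proof. by case: Hdec => [[? _] _]. Qed.
Lemma le_anti : antisymmetric le. Proof. by case: Hdec => [[_ [? _]] _]. Qed.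
Lemma le_trans : transitive le. Proof. by case: Hdec => [[_ [_ [? _]]] _]. Qed.
Lemma le_chain x y z : le y x -> le z x -> le y z || le z y.
Proof. by case: Hdec => [[_ [_ [_ [_ H]]]] _]; apply: H. Qed.
Lemma lam_cov a : exists x, a \in lam x.
Proof. by case: Hdec => [_ [H _]]. Qed.
Lemma lam_gaif a b : gaifman R a b -> exists x, (a \in lam x) && (b \in lam x).
Proof. by case: Hdec => [_ [_ [H _]]]; apply: H. Qed.
Lemma lam_conn a x y z : a \in lam x -> a \in lam y -> on_path le x y z ->
  a \in lam z.
Proof. by case: Hdec => [_ [_ [_ H]]]; apply: H. Qed.

Definition depth x := #|[set w | le w x]|.

Lemma depth_lt x y : le x y -> x != y -> depth x < depth y.
Proof.
move=> lxy nxy; apply: proper_card; apply/properP; split.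
  by apply/subsetP => w; rewrite !inE => h; apply: le_trans h lxy.
exists y; rewrite !inE ?le_refl //; apply: contra nxy => lyx.
by apply/eqP; apply: le_anti; rewrite lxy lyx.
Qed.

Definition x0 a := odflt r [pick x | a \in lam x].
Lemma x0P a : a \in lam (x0 a).
Proof.
rewrite /x0; case: pickP => [x hx | h] //=.
by have [x hx] := lam_cov a; move: (h x); rewrite hx.
Qed.

Definition top a := [arg min_(x < x0 a | a \in lam x) depth x].

Lemma topP a : a \in lam (top a) /\ forall y, a \in lam y -> depth (top a) <= depth y.
Proof. by rewrite /top; case: (@arg_minnP _ (x0 a) (fun x => a \in lam x) depth (x0P a)) => x hx hm. Qed.

Lemma top_min a y : a \in lam y -> le (top a) y.
Proof.
move=> hy; have [ht hmin] := topP a; set t := top a in ht hmin *.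
have hr : le r t && le r y by rewrite !Hr.
case: (@arg_maxnP _ r (fun w => le w t && le w y) depth hr) => m /andP[mt my] mmax.
have onp : on_path le t y m.
  rewrite /on_path mt /=; apply/forallP => w; apply/implyP => wt; apply/implyP => wy.
  case/orP: (le_chain wt mt) => // lmw.
  case: (eqVneq m w) => [<-|nmw]; first exact: le_refl.
  have := depth_lt lmw nmw; have := mmax w; rewrite wt wy => /(_ isT).
  rewrite /geq; lia.
have am := lam_conn ht hy onp.
have := hmin m am; case: (eqVneq m t) => [<-|nmt] //.
have := depth_lt mt nmt; lia.
Qed.

Definition ltA a b :=
  if top a == top b then enum_rank a < enum_rank b else le (top a) (top b).
Definition leA a b := (a == b) || ltA a b.

Lemma ltA_irr a : ltA a a = false.
Proof. by rewrite /ltA eqxx ltnn. Qed.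

Lemma ltA_trans b a c : ltA a b -> ltA b c -> ltA a c.
Proof.
rewrite /ltA; case: (eqVneq (top a) (top b)) => [eab|nab];
  case: (eqVneq (top b) (top c)) => [ebc|nbc].
- by rewrite eab ebc eqxx; apply: ltn_trans.
- by rewrite eab (negbTE nbc).
- by rewrite -ebc (negbTE nab).
move=> h1 h2; case: (eqVneq (top a) (top c)) => [eac|nac].
  have h2' : le (top b) (top a) by rewrite eac.
  by move: nab; rewrite (@le_anti (top a) (top b)) ?eqxx // h1 h2'.
exact: le_trans h1 h2.
Qed.

Lemma leA_refl : reflexive leA. Proof. by move=> a; rewrite /leA eqxx. Qed.
Lemma leA_trans : transitive leA.
Proof.
move=> b a c; rewrite /leA; case: (eqVneq a b) => [->|_] //= h1.
case: (eqVneq b c) => [<-|_] /=; first by rewrite h1 orbT.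
by move=> h2; rewrite (ltA_trans h1 h2) orbT.
Qed.
Lemma leA_anti : antisymmetric leA.
Proof.
move=> a b; rewrite /leA; case: (eqVneq a b) => //= _ /andP[h1 h2].
by move: (ltA_trans h1 h2); rewrite ltA_irr.
Qed.

Lemma le_top a b : leA a b -> le (top a) (top b).
Proof.
rewrite /leA /ltA; case: (eqVneq a b) => [->|_] /=; first by rewrite le_refl.
by case: (eqVneq (top a) (top b)) => [->|] //; rewrite le_refl.
Qed.

Lemma comp_top a b y : le (top a) y -> le (top b) y -> leA a b || leA b a.
Proof.
move=> ha hb; rewrite /leA /ltA eq_sym.
case: (eqVneq (top a) (top b)) => [e|ne].
  case: (ltngtP (enum_rank a) (enum_rank b)) => h; rewrite ?orbT //.
  by rewrite (enum_rank_inj (val_inj h)) eqxx.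
rewrite ?[top b == _]eq_sym ?(negbTE ne).
by case/orP: (le_chain ha hb) => ->; rewrite ?orbT.
Qed.

Lemma leA_chain a b c : leA a c -> leA b c -> leA a b || leA b a.
Proof. by move=> /le_top h1 /le_top h2; exact: comp_top h1 h2. Qed.

Definition rank c := #|[set a | ltA a c]|.
Lemma rank_lt a c : ltA a c -> rank a < rank c.
Proof.
move=> h; apply: proper_card; apply/properP; split.
  by apply/subsetP => w; rewrite !inE => h'; apply: ltA_trans h' h.
by exists a; rewrite !inE ?ltA_irr.
Qed.

Definition good (p : A -> 'I_k) :=
  forall a c, ltA a c -> a \in lam (top c) -> p a != p c.

Lemma avoid (X : {set 'I_k}) : #|X| < k -> exists c, c \notin X.
Proof.
move=> hX; case: (pickP (fun c => c \notin X)) => [c hc | h]; first by exists c.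
have : [set: 'I_k] \subset X by apply/subsetP=> c _; move: (h c) => /negbFE.
by move/subset_leq_card; rewrite cardsT card_ord; lia.
Qed.

Lemma col_exists : exists p : A -> 'I_k, good p.
Proof.
suff H : forall n, exists p : A -> 'I_k, forall a c, rank c < n -> ltA a c ->
    a \in lam (top c) -> p a != p c.
  have [p hp] := H #|A|.+1; exists p => a c; apply: hp.
  by rewrite ltnS /rank max_card.
elim=> [|n [p IH]]; first by exists (fun _ => Ordinal Hk0).
pose U c := [set p a | a in [set a | ltA a c && (a \in lam (top c))]].
have hU : forall c, #|U c| < k.
  move=> c; apply: leq_ltn_trans (leq_imset_card _ _) _.
  have [hc _] := topP c.
  have sub : [set a | ltA a c && (a \in lam (top c))] \subset lam (top c) :\ c.
    apply/subsetP => a; rewrite !inE => /andP[h1 ->]; rewrite andbT.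
    by apply: contraTneq h1 => ->; rewrite ltA_irr.
  apply: leq_ltn_trans (subset_leq_card sub) _.
  have := cardsD1 c (lam (top c)); rewrite hc; have := Hk (top c); lia.
pose col c := odflt (p c) [pick y | y \notin U c].
have hcol : forall c, col c \notin U c.
  move=> c; rewrite /col; case: pickP => [y hy|h] //=.
  by have [y hy] := avoid (hU c); move: (h y); rewrite hy.
exists (fun c => if rank c == n then col c else p c) => a c hc hac hl.
have hra := rank_lt hac.
have -> : (rank a == n) = false by apply/eqP; lia.
case: (eqVneq (rank c) n) => [e|ne].
  apply/eqP => e'; move: (hcol c); rewrite -e'.
  by rewrite imset_f // inE hac hl.
by apply: IH => //; lia.
Qed.

Variable p : A -> 'I_k.
Hypothesis Hp : good p.

Definition L a := sort leA [seq c <- enum A | leA c a].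
Definition fp c : 'I_k * A := (p c, c).
Definition alphaD a : Pk k A :=
  let l := map fp (L a) in (head (fp a) l, behead l).

Lemma mem_L a c : (c \in L a) = leA c a.
Proof. by rewrite /L mem_sort mem_filter mem_enum andbT. Qed.

Lemma uniq_L a : uniq (L a).
Proof. by rewrite /L sort_uniq filter_uniq // enum_uniq. Qed.

Lemma sorted_L a : sorted leA (L a).
Proof.
apply: (@sort_sorted_in _ [pred c | leA c a]); last first.
  by apply/allP => c; rewrite mem_filter => /andP[].
by move=> x y; rewrite !inE => hx hy; apply: leA_chain hx hy.
Qed.

Lemma size_L a : 0 < size (L a).
Proof. by case E: (L a) => //; move: (mem_L a a); rewrite E leA_refl. Qed.

Lemma NL_alpha a : ne_list (alphaD a) = map fp (L a).
Proof. by rewrite /alphaD; case: (L a) (size_L a). Qed.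

Lemma L_take a i : i < size (L a) -> L (nth a (L a) i) = take i.+1 (L a).
Proof.
move=> hi; set c := nth a (L a) i.
have ca : leA c a by rewrite -mem_L mem_nth.
apply: (sorted_eq leA_trans leA_anti (sorted_L c)).
  exact: take_sorted (sorted_L a).
apply: uniq_perm; [exact: uniq_L | exact/take_uniq/uniq_L|] => d.
rewrite mem_L.
have hsort := sorted_leq_nth leA_trans leA_refl a (sorted_L a).
apply/idP/idP => [dc|dt].
  have da : d \in L a by rewrite mem_L (leA_trans dc ca).
  rewrite in_take // ltnS leqNgt; apply/negP => hlt.
  have hcd : leA c d.
    rewrite -[X in leA _ X](nth_index a da); apply: hsort; rewrite ?inE ?index_mem //.
    exact: ltnW.
  have ecd : c = d by apply: leA_anti; rewrite dc hcd.
  by move: hlt; rewrite -ecd index_uniq ?ltnn // uniq_L.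
have da := mem_take dt.
move: dt; rewrite in_take // ltnS => hle.
rewrite -[X in leA X _](nth_index a da); apply: hsort; rewrite ?inE ?index_mem //.
Qed.

Lemma lastL a : nth a (L a) (size (L a)).-1 = a.
Proof.
have hs := size_L a.
have hlt : (size (L a)).-1 < size (L a) by rewrite ltn_predL.
have h := L_take hlt; rewrite prednK // take_size in h.
set c := nth a (L a) (size (L a)).-1 in h *.
apply: leA_anti; apply/andP; split.
  by rewrite -mem_L -h mem_L leA_refl.
by rewrite -mem_L h mem_L leA_refl.
Qed.

Lemma last_alpha a : last (alphaD a).1 (alphaD a).2 = fp a.
Proof.
have -> : last (alphaD a).1 (alphaD a).2 = last (fp a) (ne_list (alphaD a)) by [].
rewrite NL_alpha -nth_last size_map (nth_map a); last by rewrite prednK // size_L.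
by rewrite lastL.
Qed.

Lemma eps_alpha a : eps (alphaD a) = a.
Proof. by rewrite /eps last_alpha. Qed.
Lemma peb_alpha a : last_peb (alphaD a) = p a.
Proof. by rewrite /last_peb last_alpha. Qed.

Lemma delta_alpha a : delta (alphaD a) = Pmap alphaD (alphaD a).
Proof.
move: (NL_alpha a) (size_L a); case: (alphaD a) => x s /= E hs.
rewrite /delta /Pmap /=.
have hsize : size (L a) = (size s).+1 by rewrite -(size_map fp) -E.
congr pair.
  congr pair; apply: esym; apply: ne_eq.
  have hx : x = fp (nth a (L a) 0) by rewrite -(nth_map a x) // -E.
  rewrite NL_alpha {1}hx /= L_take // map_take -E /=.
  by rewrite take0.
rewrite -[in RHS](mkseq_nth x s) /mkseq -map_comp; apply/eq_in_map => i.
rewrite mem_iota add0n => /andP[_ hi] /=; congr pair.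
have hn : nth x s i = fp (nth a (L a) i.+1).
  by rewrite -(nth_map a x); [rewrite -E | rewrite hsize].
apply: esym; apply: ne_eq; rewrite hn /= NL_alpha L_take; last by rewrite hsize.
by rewrite map_take -E.
Qed.

Lemma prefix_mapP (U V : eqType) (g : U -> V) s1 s2 :
  prefix s1 s2 -> prefix (map g s1) (map g s2).
Proof. by move=> /prefixP[q ->]; rewrite map_cat prefix_prefix. Qed.

Lemma prefix_L c d : leA c d -> prefix (L c) (L d).
Proof.
move=> h; have cd : c \in L d by rewrite mem_L.
by rewrite -(nth_index d cd) L_take ?index_mem // prefix_take.
Qed.

Lemma comp_in s (t : (ar s).-tuple A) c d : R t -> c \in t -> d \in t ->
  leA c d || leA d c.
Proof.
move=> Rt hc hd; case: (eqVneq c d) => [->|ncd]; first by rewrite leA_refl.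
have [x /andP[hcx hdx]] := lam_gaif (conj ncd (ex_intro _ s (ex_intro _ t (conj Rt (conj hc hd))))).
exact: comp_top (top_min hcx) (top_min hdx).
Qed.

Lemma hom_alpha s (t : (ar s).-tuple A) : R t -> PRel (@R s) (map_tuple alphaD t).
Proof.
move=> Rt; rewrite /PRel; apply/andP; split; [apply/andP; split|].
- apply/forallP => i; apply/forallP => j; rewrite !tnth_map !NL_alpha.
  by case/orP: (comp_in Rt (mem_tnth i t) (mem_tnth j t)) => /prefix_L/(prefix_mapP fp) ->;
     rewrite ?orbT.
- apply/forallP => i; apply/forallP => j; apply/implyP; rewrite !tnth_map !NL_alpha.
  rewrite peb_alpha size_map -map_drop -map_comp.
  set c := tnth t i; set d := tnth t j => hpre.
  have hpre' : prefix (L c) (L d).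
    have := prefix_mapP snd hpre; rewrite -!map_comp.
    by rewrite !(@eq_map _ _ (snd \o fp) id) // !map_id.
  case: (eqVneq c d) => [<-|ncd]; first by rewrite drop_size.
  have [x /andP[hcx hdx]] := lam_gaif (conj ncd (ex_intro _ s (ex_intro _ t
     (conj Rt (conj (mem_tnth i t) (mem_tnth j t)))))).
  move: hpre' => /prefixP[q Eq].
  rewrite Eq drop_size_cat //; apply/mapP => [[e he pe]].
  have ed : leA e d by rewrite -mem_L Eq mem_cat he orbT.
  have cd : leA c d by rewrite -mem_L Eq mem_cat mem_L leA_refl.
  have ecn : e \notin L c.
    move: (uniq_L d); rewrite Eq cat_uniq => /and3P[_ /hasPn H _].
    exact: H.
  have ce : ltA c e.
    case/orP: (leA_chain cd ed) => h.
      move: h; rewrite /leA; case: (eqVneq c e) => //= ece _.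
      by move: ecn; rewrite -ece mem_L leA_refl.
    by move: ecn; rewrite mem_L h.
  have hce : c \in lam (top e).
    have [htc _] := topP c.
    apply: (lam_conn htc hcx); rewrite /on_path.
    rewrite (le_trans (le_top ed) (top_min hdx)) orbT /=.
    apply/forallP => w; apply/implyP => wc; apply/implyP => _.
    by apply: le_trans wc (le_top _); rewrite /leA ce orbT.
  by move: (Hp ce hce); rewrite pe eqxx.
- suff -> : map_tuple (@eps k A) (map_tuple alphaD t) = t by [].
  by apply: eq_from_tnth => i; rewrite !tnth_map eps_alpha.
Qed.

Lemma alpha_coalg : is_Pk_coalgebra R alphaD.
Proof.
split; first by move=> s t; exact: hom_alpha.
by split; [exact: delta_alpha | exact: eps_alpha].
Qed.

End Dir1.

Lemma ex_min (P : nat -> Prop) n : P n -> exists m, P m /\ forall j, P j -> m <= j.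
Proof.
elim: n {-2}n (leqnn n) => [|n IH] m hm hP.
  exists m; split => // j _; move: hm; rewrite leqn0 => /eqP ->; done.
case: (classic (exists j, j < m /\ P j)) => [[j [hj Pj]]|hno].
  by apply: (IH j) => //; lia.
exists m; split => // j Pj; rewrite leqNgt; apply/negP => hj.
by apply: hno; exists j.
Qed.

Lemma trivial_dec (S : Type) (ar : S -> nat) (A : finType)
    (R : forall s : S, pred ((ar s).-tuple A)) :
  tree_dec R ((fun _ _ => true) : rel unit) (fun _ => [set: A]).
Proof.
split.
  split; first by [].
  split; first by case; case.
  split; first by [].
  split; first by exists tt.
  by [].
split; first by move=> a; exists tt; rewrite inE.
split; first by move=> a b _; exists tt; rewrite !inE.
by move=> a _ _ _ _ _ _; rewrite inE.
Qed.

Theorem mainTheorem14 (S : Type) (ar : S -> nat) (A : finType)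
    (R : forall s : S, pred ((ar s).-tuple A)) :
  0 < #|A| ->
  exists n : nat, is_tw R n /\ is_kappaP R n.+1.
Proof.
move=> hA.
pose P w := exists (T : finType) (le : rel T) (lam : T -> {set A}),
      tree_dec R le lam /\ width lam = w.
have P0 : P (width (fun _ : unit => [set: A])).
  by exists unit, (fun _ _ => true), (fun _ => [set: A]); split; [exact: trivial_dec|].
have [w [[T [le [lam [hd hw]]]] wmin]] := ex_min P0.
exists w; split.
  split; first by exists T, le, lam.
  by move=> T' le' lam' hd'; apply: wmin; exists T', le', lam'.
have [[_ [_ [_ [[r0 Hr] _]]]] _] := hd.
have Hk : forall x, #|lam x| <= w.+1.
  move=> x; rewrite -hw /width; have := @leq_bigmax T (fun x => #|lam x|) x; lia.
split; first by [].
split.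
  have [p hp] := col_exists r0 hd Hk (ltn0Sn w).
  by exists (alphaD le lam r0 p); exact: (alpha_coalg hd Hr (ltn0Sn w) hp).
move=> m hm [alpha hal].
have h1 := dir2_width hal.
have h2 : w <= width (lamO alpha) by apply: wmin; exists (option A), (leO alpha), (lamO alpha); split; [exact: dir2_dec hal|].
lia.
Qed.
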